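(* For every integer $k\ge2$, $$\max_{n\ge1}\frac{\log\tau_k(n)}{n}=\frac{\log k}{2}.$$
   Context: $\tau_k(n)$ is the number of ordered $k$-tuples of positive integers $(d_1,\dots,d_k)$ with $d_1\cdots d_k=n$. *)

(* Defs.v *)
From mathcomp Require Import all_boot.
Set Implicit Arguments. Unset Strict Implicit. Unset Printing Implicit Defensive.

(* tau k n = number of ordered k-tuples (d_1,...,d_k) of positive integers with
   d_1 * ... * d_k = n.  For n >= 1 every such d_i divides n, so d_i <= n and
   it suffices to range over 'I_n.+1. *)
Definition tau (k n : nat) : nat :=
  #|[set t : k.-tuple 'I_n.+1 |
       all (fun d : 'I_n.+1 => 0 < (d : nat)) t &&
       (\prod_(d <- t) (d : nat) == n)]|.

(* Main.v *)
Require Import Defs.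
Module NatPart.
From mathcomp Require Import all_boot.

Definition S k n := [set t : k.-tuple 'I_n.+1 |
       all (fun d : 'I_n.+1 => 0 < (d : nat)) t &&
       (\prod_(d <- t) (d : nat) == n)].

Lemma tauE k n : tau k n = #|S k n|. Proof. by []. Qed.

Lemma tau1 k : tau k 1 <= 1.
Proof.
rewrite tauE; apply/card_le1_eqP => t1 t2; rewrite !inE => /andP[h1 _] /andP[h2 _].
apply: eq_from_tnth => j.
move/allP: h1 => /(_ (tnth t1 j) (mem_tnth _ _)).
move/allP: h2 => /(_ (tnth t2 j) (mem_tnth _ _)).
case: (tnth t1 j) (tnth t2 j) => [[|[|a]] Ha] [[|[|b]] Hb] //= _ _; apply/val_inj => //.
Qed.

Lemma tau_step k p m : prime p -> 0 < m -> tau k.+1 (p * m) <= k.+1 * tau k.+1 m.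
Proof.
move=> pp m0; rewrite !tauE.
have p0 : 0 < p by apply: prime_gt0.
pose ii (t : k.+1.-tuple 'I_(p * m).+1) : 'I_k.+1 := inord (find (fun d : 'I_(p*m).+1 => p %| d) t).
pose g (t : k.+1.-tuple 'I_(p * m).+1) (j : 'I_k.+1) : nat :=
  if j == ii t then tnth t j %/ p else tnth t j.
pose f t := (ii t, [tuple (inord (g t j) : 'I_m.+1) | j < k.+1]).
have Hi : forall t, t \in S k.+1 (p * m) ->
   [/\ find (fun d : 'I_(p*m).+1 => p %| d) t = ii t, p %| tnth t (ii t),
       \prod_j g t j = m & forall j, 0 < tnth t j].
  move=> t; rewrite inE => /andP[/allP hpos /eqP hprod].
  have hpos' : forall j, 0 < tnth t j by move=> j; apply: hpos; apply: mem_tnth.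
  have hhas : has (fun d : 'I_(p*m).+1 => p %| d) t.
    have : p %| \prod_(d <- t) (d : nat) by rewrite hprod dvdn_mulr.
    by rewrite Euclid_dvd_prod // big_has.
  have hf : find (fun d : 'I_(p*m).+1 => p %| d) t = ii t.
    by rewrite /ii inordK // -{2}(size_tuple t) -has_find.
  have hd : p %| tnth t (ii t).
    have := nth_find (tnth t (ii t)) hhas; rewrite hf -tnth_nth; exact.
  split => //.
  move: hprod; rewrite big_tuple (bigD1 (ii t)) //= => hprod.
  rewrite (bigD1 (ii t)) //= /g eqxx.
  have -> : \prod_(j | j != ii t) (if j == ii t then tnth t j %/ p else tnth t j)
        = \prod_(j | j != ii t) (tnth t j : nat).
    by apply: eq_bigr => j /negbTE ->.
  apply/eqP; rewrite -(eqn_pmul2l p0); apply/eqP.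
  by rewrite mulnA (mulnC p) divnK.
have Hg : forall t, t \in S k.+1 (p * m) -> forall j, g t j <= m /\ 0 < g t j.
  move=> t /Hi [_ hd hp hpos] j.
  have hdv : g t j %| m.
    by rewrite -hp (bigD1 j) //= dvdn_mulr.
  split; first exact: dvdn_leq.
  rewrite /g; case: eqP => [->|_]; last exact: hpos.
  by rewrite divn_gt0 // dvdn_leq.
have inj : {in S k.+1 (p * m) &, injective f}.
  move=> t1 t2 h1 h2 e; have /= ei := congr1 fst e; have /= et := congr1 snd e.
  have eg : forall j, g t1 j = g t2 j.
    move=> j; have := congr1 (fun t => val (tnth t j)) et.
    rewrite /= !tnth_mktuple !inordK //; apply: leq_ltn_trans (_ : m < m.+1) => //.
    - by case: (Hg _ h2 j).
    - by case: (Hg _ h1 j).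
  apply: eq_from_tnth => j; apply/val_inj => /=.
  have := eg j; rewrite /g ei; case: eqP => [->|_] //.
  case: (Hi _ h1) => _ d1 _ _; case: (Hi _ h2) => _ d2 _ _.
  by rewrite -ei => e1; rewrite -(divnK d1) e1 ei (divnK d2).
rewrite -(card_in_imset inj).
have sub : [set f x | x in S k.+1 (p * m)] \subset setX [set: 'I_k.+1] (S k.+1 m).
  apply/subsetP => _ /imsetP [t ht ->]; rewrite inE /= inE /=.
  rewrite inE; apply/andP; split.
    apply/allP => d /mapP [j _ ->] /=; rewrite inordK; first by case: (Hg _ ht j).
    by case: (Hg _ ht j).
  rewrite big_tuple; apply/eqP; case: (Hi _ ht) => _ _ hm _.
  rewrite -[X in _ = X]hm; apply: eq_bigr => j _; rewrite tnth_mktuple inordK //.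
  by case: (Hg _ ht j).
by apply: leq_trans (subset_leq_card sub) _; rewrite cardsX cardsT card_ord.
Qed.

Lemma tau2 k : tau k.+1 2 = k.+1.
Proof.
apply/eqP; rewrite eqn_leq; apply/andP; split.
  have := @tau_step k 2 1 isT isT ; rewrite muln1 => h.
  by apply: leq_trans h _; rewrite -[X in _ <= X]muln1 leq_mul2l tau1 orbT.
pose h (i : 'I_k.+1) : k.+1.-tuple 'I_3 :=
  [tuple (if j == i then inord 2 else inord 1) | j < k.+1].
have hinj : injective h.
  move=> i1 i2 e; have := congr1 (fun t => val (tnth t i1)) e.
  rewrite /= !tnth_mktuple eqxx; case: eqP => [->//|_].
  by rewrite !inordK.
rewrite tauE -[X in X <= _]card_ord -(card_imset _ hinj).
apply: subset_leq_card; apply/subsetP => _ /imsetP [i _ ->]; rewrite inE.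
apply/andP; split.
  apply/allP => d /mapP [j _ ->]; by case: eqP; rewrite inordK.
rewrite big_tuple (bigD1 i) //= tnth_mktuple eqxx inordK //.
rewrite big1 // => j /negbTE hj; by rewrite tnth_mktuple hj inordK.
Qed.

Lemma tau_bound k n : 0 < n -> tau k.+2 n ^ 2 <= k.+2 ^ n.
Proof.
elim/ltn_ind: n => n IH n0.
have [n1|n1] := leqP n 1.
  have -> : n = 1 by apply/eqP; rewrite eqn_leq n1.
  apply: leq_trans (_ : 1 <= _); last by rewrite expn_gt0.
  by rewrite -(exp1n 2) leq_exp2r // tau1.
have pp := pdiv_prime n1; set p := pdiv n in pp.
have pd : p %| n := pdiv_dvd n.
set m := n %/ p.
have nE : n = p * m by rewrite /m mulnC divnK.
have p1 := prime_gt1 pp.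
have m0 : 0 < m by rewrite /m divn_gt0 ?prime_gt0 // dvdn_leq.
have hs := @tau_step k.+1 p m pp m0; rewrite -nE in hs.
have [m1|m1] := leqP m 1.
  have me : m = 1 by apply/eqP; rewrite eqn_leq m1.
  apply: leq_trans (_ : k.+2 ^ 2 <= _).
    rewrite leq_exp2r //; apply: leq_trans hs _; rewrite me.
    by rewrite -[X in _ <= X]muln1 leq_mul2l tau1 orbT.
  by rewrite leq_pexp2l // nE me muln1.
have mn : m < n by rewrite nE -{1}(mul1n m) ltn_mul2r m0.
apply: leq_trans (_ : (k.+2 * tau k.+2 m) ^ 2 <= _); first by rewrite leq_exp2r.
rewrite expnMn; apply: leq_trans (_ : k.+2 ^ 2 * k.+2 ^ m <= _).
  by rewrite leq_mul2l IH // orbT.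
rewrite -expnD leq_pexp2l // nE.
apply: leq_trans (_ : m + m <= _); first by rewrite addnC leq_add2l.
by rewrite addnn -mul2n leq_mul2r p1 orbT.
Qed.

Lemma tau_pos k n : 0 < n -> 0 < tau k.+1 n.
Proof.
move=> n0; rewrite tauE card_gt0; apply/set0Pn.
exists [tuple (if j == ord0 then inord n else inord 1) | j < k.+1]; rewrite inE.
apply/andP; split.
  apply/allP => d /mapP [j _ ->]; by case: eqP; rewrite inordK.
rewrite big_tuple (bigD1 ord0) //= tnth_mktuple eqxx inordK //.
rewrite big1 ?muln1 // => j /negbTE hj; by rewrite tnth_mktuple hj inordK.
Qed.

Lemma expP a n : a ^ n = Nat.pow a n.
Proof. elim: n => [|n IH] //=; by rewrite expnS IH. Qed.

Lemma tau_boundP k n : (0 < n)%coq_nat ->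
  (tau k.+2 n * tau k.+2 n <= Nat.pow k.+2 n)%coq_nat.
Proof.
move/ltP=> n0; apply/leP; rewrite -expP mulnn; exact: tau_bound.
Qed.

Lemma tau_posP k n : (0 < n)%coq_nat -> (0 < tau k.+1 n)%coq_nat.
Proof. by move/ltP=> n0; apply/ltP; apply: tau_pos. Qed.
End NatPart.

From Stdlib Require Import Reals Lra Lia.
Open Scope R_scope.

Theorem lemma3 (k : nat) (hk : (2 <= k)%nat) :
  (exists n : nat, (1 <= n)%nat /\
     ln (INR (tau k n)) / INR n = ln (INR k) / 2) /\
  (forall n : nat, (1 <= n)%nat ->
     ln (INR (tau k n)) / INR n <= ln (INR k) / 2).
Proof.
destruct k as [|[|k]]; try (exfalso; inversion hk; inversion H0; fail).
split.
- exists 2%nat; split; [auto|].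
  rewrite NatPart.tau2. replace (INR 2) with 2 by (simpl; ring). reflexivity.
- intros n hn.
  assert (hb := NatPart.tau_boundP k n hn).
  assert (hp := NatPart.tau_posP (S k) n hn).
  set (t := tau (S (S k)) n) in *.
  apply le_INR in hb; rewrite mult_INR, pow_INR in hb.
  apply lt_INR in hp; simpl in hp.
  assert (hn' : 0 < INR n) by (apply lt_0_INR; lia).
  assert (hK : 0 < INR (S (S k))) by (apply lt_0_INR; lia).
  assert (h2 : 2 * ln (INR t) <= INR n * ln (INR (S (S k)))).
  { rewrite <- ln_pow by exact hK.
    replace (2 * ln (INR t)) with (ln (INR t * INR t)).
    - destruct (Rle_lt_or_eq_dec _ _ hb) as [hl|he].
      + left; apply ln_increasing; [nra|exact hl].
      + right; rewrite he; reflexivity.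
    - rewrite ln_mult by lra. ring. }
  replace (ln (INR t) / INR n) with ((2 * ln (INR t)) * / (2 * INR n)) by (field; lra).
  replace (ln (INR (S (S k))) / 2) with ((INR n * ln (INR (S (S k)))) * / (2 * INR n)) by (field; lra).
  apply Rmult_le_compat_r; [left; apply Rinv_0_lt_compat; lra | exact h2].
Qed.
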